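(* Let $A,B\in\mathbb{R}^{m\times n}$ with $A\ne0$, $B\neq0$ and $\operatorname{rank}(A+B)>1$. Choose $(i,j)$ with $a_{i,j}\neq0$, and assume it is not the case that ($b_{i,j}\neq0$ and $\operatorname{rank}(A-\frac{a_{i,j}}{b_{i,j}}B)=1$). Define $\mathbf{r}_j(\lambda)=A^{(j)}+\lambda B^{(j)}$ and $\mathbf{c}_i(\lambda)^\mathsf{T}=\frac{1}{a_{i,j}+\lambda b_{i,j}}(A_{(i)}+\lambda B_{(i)})$ (for $a_{i,j}+\lambda b_{i,j}\neq0$), and $f_{s,t}(i,j;\lambda)=a_{s,t}+\lambda b_{s,t}-\frac{(a_{s,j}+\lambda b_{s,j})(a_{i,t}+\lambda b_{i,t})}{a_{i,j}+\lambda b_{i,j}}$. Pick any $(l,k)$ such that $f_{l,k}(i,j;\lambda)$ is not identically zero, and let $\hat\Lambda$ be the (at most two-element) set of $\hat\lambda\in\mathbb{C}$ with $a_{i,j}+\hat\lambda b_{i,j}\neq0$ and $f_{l,k}(i,j;\hat\lambda)=0$. Then there exists $\lambda^*\in\mathbb{C}$ with $\operatorname{rank}(A+\lambda^*B)=1$ if and only if some $\hat\lambda\in\hat\Lambda$ satisfies $A+\hat\lambda B=\mathbf{r}_j(\hat\lambda)\mathbf{c}_i(\hat\lambda)^\mathsf{T}$.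
   Context: For a matrix $M$, $M_{(i)}$ is its $i$-th row, $M^{(j)}$ its $j$-th column, and $m_{i,j}$ its $(i,j)$ entry. Ranks are over $\mathbb{C}$. A rational function is identically zero iff its numerator is the zero polynomial. *)

(* Defs.v *)
From HB Require Import structures.
From mathcomp Require Import all_boot all_order all_algebra.
Set Implicit Arguments. Unset Strict Implicit. Unset Printing Implicit Defensive.
Import Order.TTheory GRing.Theory Num.Theory.
Local Open Scope ring_scope.

Section Defs.
Variables (C : numClosedFieldType) (m n : nat).

Definition real_mx (A : 'M[C]_(m, n)) : Prop := forall s t, A s t \is Num.real.

Definition rvec (A B : 'M[C]_(m, n)) (j : 'I_n) (lam : C) : 'cV[C]_m :=
  col j A + lam *: col j B.

Definition cvecT (A B : 'M[C]_(m, n)) (i : 'I_m) (j : 'I_n) (lam : C) : 'rV[C]_n :=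
  (A i j + lam * B i j)^-1 *: (row i A + lam *: row i B).

Definition fval (A B : 'M[C]_(m, n)) (i : 'I_m) (j : 'I_n) (s : 'I_m) (t : 'I_n)
  (lam : C) : C :=
  A s t + lam * B s t
  - (A s j + lam * B s j) * (A i t + lam * B i t) / (A i j + lam * B i j).

(* numerator polynomial of the rational function f_{s,t}(i,j;.) :
   (a_st + X b_st)(a_ij + X b_ij) - (a_sj + X b_sj)(a_it + X b_it) *)
Definition fnum (A B : 'M[C]_(m, n)) (i : 'I_m) (j : 'I_n) (s : 'I_m) (t : 'I_n)
  : {poly C} :=
  ((A s t)%:P + B s t *: 'X) * ((A i j)%:P + B i j *: 'X)
  - ((A s j)%:P + B s j *: 'X) * ((A i t)%:P + B i t *: 'X).

(* f_{s,t}(i,j;.) is identically zero iff its numerator is the zero polynomial *)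
Definition f_ident_zero (A B : 'M[C]_(m, n)) (i : 'I_m) (j : 'I_n) (s : 'I_m) (t : 'I_n) : Prop := fnum A B i j s t = 0.

Definition in_Lambda_hat (A B : 'M[C]_(m, n)) (i : 'I_m) (j : 'I_n) (l : 'I_m) (k : 'I_n) (lam : C) : Prop :=
  A i j + lam * B i j != 0 /\ fval A B i j l k lam = 0.

End Defs.

(* Main.v *)
Require Import Defs.
From HB Require Import structures.
From mathcomp Require Import all_boot all_order all_algebra.
From mathcomp Require Import ring.
Import Order.TTheory GRing.Theory Num.Theory.
Local Open Scope ring_scope.

Lemma rank1_minor (F : fieldType) (m n : nat) (M : 'M[F]_(m, n)) :
  \rank M = 1%N -> forall s t i j, M s t * M i j = M s j * M i t.
Proof.
move=> H.
have := mulmx_base M; move: (col_base M) (row_base M); rewrite H => c r <-.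
move=> s t i j; rewrite !mxE !big_ord1; ring.
Qed.

Theorem mainTheorem7 (C : numClosedFieldType) (m n : nat)
  (A B : 'M[C]_(m, n)) (i : 'I_m) (j : 'I_n) (l : 'I_m) (k : 'I_n) :
  real_mx A -> real_mx B ->
  A != 0 -> B != 0 -> (1 < \rank (A + B)%R)%N ->
  A i j != 0 ->
  ~ (B i j != 0 /\ \rank (A - (A i j / B i j) *: B)%R = 1%N) ->
  ~ f_ident_zero A B i j l k ->
  (exists lam : C, \rank (A + lam *: B)%R = 1%N) <->
  (exists2 lam : C, in_Lambda_hat A B i j l k lam &
     A + lam *: B = rvec A B j lam *m cvecT A B i j lam).
Proof.
move=> _ _ _ _ _ Aij Hn _; split.
- move=> [lam Hr].
  have Hm := @rank1_minor C _ _ _ Hr.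
  have E : forall s t, (A + lam *: B) s t = A s t + lam * B s t.
    by move=> s t; rewrite !mxE.
  have {}Hm : forall s t, (A s t + lam * B s t) * (A i j + lam * B i j)
                = (A s j + lam * B s j) * (A i t + lam * B i t).
    by move=> s t; have := Hm s t i j; rewrite !E.
  have [d0|dn0] := eqVneq (A i j + lam * B i j) 0.
    exfalso; apply: Hn.
    have Bn : B i j != 0.
      apply/eqP => B0; move: d0; rewrite B0 mulr0 addr0 => /eqP; exact/negP.
    split => //.
    have -> : A i j / B i j = - lam.
      apply: (mulIf Bn); rewrite mulfVK // mulNr; apply/eqP.
      by rewrite -addr_eq0 d0.
    by rewrite scaleNr opprK.
  exists lam.
    split => //; rewrite /fval.
    by rewrite -[(A l j + _) * _]Hm mulfK // subrr.
  apply/matrixP => s t; rewrite !mxE big_ord1 !mxE.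
  by rewrite mulrCA -Hm [_ * (A i j + _)]mulrC mulKf.
- move=> [lam [dn0 _] Heq]; exists lam; apply/eqP; rewrite eqn_leq; apply/andP; split.
    rewrite Heq; apply: leq_trans (mxrankM_maxl _ _) _; exact: rank_leq_col.
  rewrite lt0n mxrank_eq0; apply/eqP => M0.
  by move: dn0; have := congr1 (fun M : 'M[C]_(m, n) => M i j) M0; rewrite !mxE => ->; rewrite eqxx.
Qed.
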